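(* Let $P \subseteq \mathbb{R}^7$ be an associative $3$-plane. Then the two $\mathfrak{so}(3)$ subalgebras $\Lambda^2(P)$ and $\Psi(P)$ of $\Lambda^2(\mathbb{R}^7)$ commute: if $X \in \Lambda^2(P)$ and $Y \in \Psi(P)$ then $[X,Y] = 0$.
   Context: Equip $\mathbb{R}^7$ with its standard inner product, orientation and basis. Let $\varphi = e_{123} - e_{167} - e_{527} - e_{563} - e_{415} - e_{426} - e_{437}$ ($e_{ijk} = e_i\wedge e_j\wedge e_k$), $\psi = \star\varphi = e_{4567} - e_{4523} - e_{4163} - e_{4127} - e_{2637} - e_{1537} - e_{1526}$, and define $\times$ by $\langle u \times v, w \rangle = \varphi(u,v,w)$. A $3$-dimensional subspace is associative if closed under $\times$. For $u,v$: $u\wedge v$ is the 2-form $(a,b)\mapsto \langle u,a\rangle\langle v,b\rangle - \langle u,b\rangle\langle v,a\rangle$, and $\Psi_{uv}$ is the 2-form $(a,b)\mapsto\psi(u,v,a,b)$. $\Lambda^2(P) = \mathrm{Span}\{u\wedge v: u,v\in P\}$, $\Psi(P) = \mathrm{Span}\{\Psi_{uv} : u,v\in P\}$. Skew bilinear forms are identified with skew-adjoint operators via $X(a,b) = \langle X(a),b\rangle$, and the bracket is the commutator. *)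

(* Defs.v *)
(* R^7 is modelled as row vectors 'rV[R]_7 over a realType R.
   Basis vector e_i (1-based, i = 1..7) is delta_mx 0 (i-1). *)
From HB Require Import structures.
From mathcomp Require Import all_boot all_order all_algebra.
From mathcomp Require Import reals.
Set Implicit Arguments. Unset Strict Implicit. Unset Printing Implicit Defensive.
Import Order.TTheory GRing.Theory Num.Theory.
Local Open Scope ring_scope.

Section G2.
Variable R : realType.
Notation V := 'rV[R]_7.

Definition dot (u v : V) : R := \sum_(i < 7) u 0 i * v 0 i.

Definition ebasis (i : nat) : V := delta_mx 0 (inord i.-1).

Definition coord7 (u : V) (i : nat) : R := u 0 (inord i.-1).

Definition e3 (i j k : nat) (u v w : V) : R :=
  \det (\matrix_(r < 3, c < 3)
          coord7 (tnth [tuple u; v; w] r) (tnth [tuple i; j; k] c)).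

Definition e4 (i j k l : nat) (u v w x : V) : R :=
  \det (\matrix_(r < 4, c < 4)
          coord7 (tnth [tuple u; v; w; x] r) (tnth [tuple i; j; k; l] c)).

Definition phi (u v w : V) : R :=
  e3 1 2 3 u v w - e3 1 6 7 u v w - e3 5 2 7 u v w - e3 5 6 3 u v w
  - e3 4 1 5 u v w - e3 4 2 6 u v w - e3 4 3 7 u v w.

Definition psi (u v w x : V) : R :=
  e4 4 5 6 7 u v w x - e4 4 5 2 3 u v w x - e4 4 1 6 3 u v w x
  - e4 4 1 2 7 u v w x - e4 2 6 3 7 u v w x - e4 1 5 3 7 u v w x
  - e4 1 5 2 6 u v w x.

(* cross product: <u x v, w> = phi(u,v,w) *)
Definition cross (u v : V) : V := \row_(k < 7) phi u v (delta_mx 0 k).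

Definition associative_plane (P : 'M[R]_7) : Prop :=
  \rank P = 3%N /\
  forall u v : V, (u <= P)%MS -> (v <= P)%MS -> (cross u v <= P)%MS.

(* bilinear forms on R^7, represented by their Gram matrix X i j = X(e_i,e_j) *)
Definition form_mx (f : V -> V -> R) : 'M[R]_7 :=
  \matrix_(i < 7, j < 7) f (delta_mx 0 i) (delta_mx 0 j).

Definition wedge2 (u v : V) : V -> V -> R :=
  fun a b => dot u a * dot v b - dot u b * dot v a.

Definition Psi2 (u v : V) : V -> V -> R := fun a b => psi u v a b.

Definition in_Lambda2 (P : 'M[R]_7) (X : 'M[R]_7) : Prop :=
  exists (n : nat) (c : 'I_n -> R) (u v : 'I_n -> V),
    (forall k, (u k <= P)%MS /\ (v k <= P)%MS) /\
    X = \sum_(k < n) c k *: form_mx (wedge2 (u k) (v k)).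

Definition in_PsiP (P : 'M[R]_7) (Y : 'M[R]_7) : Prop :=
  exists (n : nat) (c : 'I_n -> R) (u v : 'I_n -> V),
    (forall k, (u k <= P)%MS /\ (v k <= P)%MS) /\
    Y = \sum_(k < n) c k *: form_mx (Psi2 (u k) (v k)).

(* skew form with Gram matrix X identified with the operator X(.) given by
   <X(a),b> = X(a,b): since X(a,b) = a *m X *m b^T = dot (a *m X) b,
   the operator is a |-> a *m X. *)
Definition skew_op (X : 'M[R]_7) (a : V) : V := a *m X.

Definition bracket (X Y : 'M[R]_7) : V -> V :=
  fun a => skew_op X (skew_op Y a) - skew_op Y (skew_op X a).

End G2.

(* Main.v *)
Require Import Defs.
From HB Require Import structures.
From mathcomp Require Import all_boot all_order all_algebra.
From mathcomp Require Import reals ring.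
Set Implicit Arguments. Unset Strict Implicit. Unset Printing Implicit Defensive.
Import GRing.Theory Num.Theory.
Local Open Scope ring_scope.

Section S.
Variable R : realType.
Lemma det2 (A : 'M[R]_2) : \det A = A ord0 ord0 * A (lift ord0 ord0) (lift ord0 ord0)
   - A ord0 (lift ord0 ord0) * A (lift ord0 ord0) ord0.
Proof.
rewrite (expand_det_row _ ord0) !big_ord_recl big_ord0 /cofactor !det_mx11 !mxE /=.
rewrite (_ : lift (lift ord0 ord0) 0 = ord0); last by apply/val_inj.
rewrite /bump /=; ring.
Qed.
Lemma det3f (f : nat -> nat -> R) : \det (\matrix_(i<3,j<3) f i j) =
  f 0 0 * (f 1 1 * f 2 2 - f 1 2 * f 2 1) - f 0 1 * (f 1 0 * f 2 2 - f 1 2 * f 2 0)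
  + f 0 2 * (f 1 0 * f 2 1 - f 1 1 * f 2 0).
Proof.
rewrite (expand_det_row _ ord0) !big_ord_recl big_ord0 /cofactor !det2 !mxE /bump /=.
ring.
Qed.
Lemma det3g (A : 'M[R]_3) : let f a b := A (inord a) (inord b) in \det A =
  f 0 0 * (f 1 1 * f 2 2 - f 1 2 * f 2 1) - f 0 1 * (f 1 0 * f 2 2 - f 1 2 * f 2 0)
  + f 0 2 * (f 1 0 * f 2 1 - f 1 1 * f 2 0).
Proof.
move=> f; rewrite -det3f; congr (\det _); apply/matrixP => i j; rewrite mxE /f !inord_val //.
Qed.
Lemma det4f (f : nat -> nat -> R) : \det (\matrix_(i<4,j<4) f i j) =
  f 0 0 * (f 1 1 * (f 2 2 * f 3 3 - f 2 3 * f 3 2) - f 1 2 * (f 2 1 * f 3 3 - f 2 3 * f 3 1) + f 1 3 * (f 2 1 * f 3 2 - f 2 2 * f 3 1))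
- f 0 1 * (f 1 0 * (f 2 2 * f 3 3 - f 2 3 * f 3 2) - f 1 2 * (f 2 0 * f 3 3 - f 2 3 * f 3 0) + f 1 3 * (f 2 0 * f 3 2 - f 2 2 * f 3 0))
+ f 0 2 * (f 1 0 * (f 2 1 * f 3 3 - f 2 3 * f 3 1) - f 1 1 * (f 2 0 * f 3 3 - f 2 3 * f 3 0) + f 1 3 * (f 2 0 * f 3 1 - f 2 1 * f 3 0))
- f 0 3 * (f 1 0 * (f 2 1 * f 3 2 - f 2 2 * f 3 1) - f 1 1 * (f 2 0 * f 3 2 - f 2 2 * f 3 0) + f 1 2 * (f 2 0 * f 3 1 - f 2 1 * f 3 0)).
Proof.
rewrite (expand_det_row _ ord0) !big_ord_recl big_ord0 /cofactor !det3g !mxE /= !inordK // /bump /=.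
ring.
Qed.
Lemma e3E i j k (u v w : 'rV[R]_7) : let f a b := coord7 (nth 0 [:: u; v; w] a) (nth 0%N [:: i; j; k] b) in
  e3 i j k u v w =
  f 0 0 * (f 1 1 * f 2 2 - f 1 2 * f 2 1) - f 0 1 * (f 1 0 * f 2 2 - f 1 2 * f 2 0)
  + f 0 2 * (f 1 0 * f 2 1 - f 1 1 * f 2 0).
Proof.
move=> f; rewrite /e3 -det3f; congr (\det _); apply/matrixP => a b.
by rewrite !mxE /f (tnth_nth 0) (tnth_nth 0%N).
Qed.
Lemma e4E i j k l (u v w x : 'rV[R]_7) : let f a b := coord7 (nth 0 [:: u; v; w; x] a) (nth 0%N [:: i; j; k; l] b) in
  e4 i j k l u v w x =
  f 0 0 * (f 1 1 * (f 2 2 * f 3 3 - f 2 3 * f 3 2) - f 1 2 * (f 2 1 * f 3 3 - f 2 3 * f 3 1) + f 1 3 * (f 2 1 * f 3 2 - f 2 2 * f 3 1))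
- f 0 1 * (f 1 0 * (f 2 2 * f 3 3 - f 2 3 * f 3 2) - f 1 2 * (f 2 0 * f 3 3 - f 2 3 * f 3 0) + f 1 3 * (f 2 0 * f 3 2 - f 2 2 * f 3 0))
+ f 0 2 * (f 1 0 * (f 2 1 * f 3 3 - f 2 3 * f 3 1) - f 1 1 * (f 2 0 * f 3 3 - f 2 3 * f 3 0) + f 1 3 * (f 2 0 * f 3 1 - f 2 1 * f 3 0))
- f 0 3 * (f 1 0 * (f 2 1 * f 3 2 - f 2 2 * f 3 1) - f 1 1 * (f 2 0 * f 3 2 - f 2 2 * f 3 0) + f 1 2 * (f 2 0 * f 3 1 - f 2 1 * f 3 0)).
Proof.
move=> f; rewrite /e4 -det4f; congr (\det _); apply/matrixP => a b.
by rewrite !mxE /f (tnth_nth 0) (tnth_nth 0%N).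
Qed.
Lemma dotE (u v : 'rV[R]_7) : dot u v = \sum_(i < 7) coord7 u i.+1 * coord7 v i.+1.
Proof. by apply: eq_bigr => i _; rewrite /coord7 /= inord_val. Qed.
Lemma crossE (u v : 'rV[R]_7) n : coord7 (cross u v) n = phi u v (delta_mx 0 (inord n.-1)).
Proof. by rewrite /coord7 /cross mxE. Qed.
Lemma dcoord m n : (m < 7)%N -> (n.-1 < 7)%N ->
  coord7 (delta_mx 0 (inord m) : 'rV[R]_7) n = (m == n.-1)%:R.
Proof.
move=> hm hn; rewrite /coord7 mxE eqxx /=.
have h : (inord m == inord n.-1 :> 'I_7) = (m == n.-1).
  apply/idP/idP => [/eqP/(congr1 val)|/eqP->//]; rewrite /= !inordK // => ->//.
by rewrite eq_sym h.
Qed.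
Lemma cross1 (u v : 'rV[R]_7) : coord7 (cross u v) 1 = (coord7 u 2 * coord7 v 3 - coord7 u 3 * coord7 v 2) - (coord7 u 6 * coord7 v 7 - coord7 u 7 * coord7 v 6) + (coord7 u 4 * coord7 v 5 - coord7 u 5 * coord7 v 4).
Proof. rewrite crossE /phi !e3E /= !dcoord //=; ring. Qed.
Lemma cross2 (u v : 'rV[R]_7) : coord7 (cross u v) 2 = 0 - (coord7 u 1 * coord7 v 3 - coord7 u 3 * coord7 v 1) + (coord7 u 5 * coord7 v 7 - coord7 u 7 * coord7 v 5) + (coord7 u 4 * coord7 v 6 - coord7 u 6 * coord7 v 4).
Proof. rewrite crossE /phi !e3E /= !dcoord //=; ring. Qed.
Lemma cross3 (u v : 'rV[R]_7) : coord7 (cross u v) 3 = (coord7 u 1 * coord7 v 2 - coord7 u 2 * coord7 v 1) - (coord7 u 5 * coord7 v 6 - coord7 u 6 * coord7 v 5) + (coord7 u 4 * coord7 v 7 - coord7 u 7 * coord7 v 4).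
Proof. rewrite crossE /phi !e3E /= !dcoord //=; ring. Qed.
Lemma cross4 (u v : 'rV[R]_7) : coord7 (cross u v) 4 = 0 - (coord7 u 1 * coord7 v 5 - coord7 u 5 * coord7 v 1) - (coord7 u 2 * coord7 v 6 - coord7 u 6 * coord7 v 2) - (coord7 u 3 * coord7 v 7 - coord7 u 7 * coord7 v 3).
Proof. rewrite crossE /phi !e3E /= !dcoord //=; ring. Qed.
Lemma cross5 (u v : 'rV[R]_7) : coord7 (cross u v) 5 = 0 - (coord7 u 2 * coord7 v 7 - coord7 u 7 * coord7 v 2) - (coord7 u 6 * coord7 v 3 - coord7 u 3 * coord7 v 6) - (coord7 u 4 * coord7 v 1 - coord7 u 1 * coord7 v 4).
Proof. rewrite crossE /phi !e3E /= !dcoord //=; ring. Qed.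
Lemma cross6 (u v : 'rV[R]_7) : coord7 (cross u v) 6 = (coord7 u 1 * coord7 v 7 - coord7 u 7 * coord7 v 1) + (coord7 u 5 * coord7 v 3 - coord7 u 3 * coord7 v 5) - (coord7 u 4 * coord7 v 2 - coord7 u 2 * coord7 v 4).
Proof. rewrite crossE /phi !e3E /= !dcoord //=; ring. Qed.
Lemma cross7 (u v : 'rV[R]_7) : coord7 (cross u v) 7 = 0 - (coord7 u 1 * coord7 v 6 - coord7 u 6 * coord7 v 1) - (coord7 u 5 * coord7 v 2 - coord7 u 2 * coord7 v 5) - (coord7 u 4 * coord7 v 3 - coord7 u 3 * coord7 v 4).
Proof. rewrite crossE /phi !e3E /= !dcoord //=; ring. Qed.
Lemma ident (x y z a : 'rV[R]_7) :
  psi x y z a = phi x (cross y z) a + dot x y * dot z a - dot x z * dot y a.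
Proof.
rewrite /psi !e4E.
rewrite {1}/phi !e3E /=.
rewrite cross1 cross2 cross3 cross4 cross5 cross6 cross7.
rewrite !dotE !big_ord_recr !big_ord0 /=.
ring.
Qed.

Lemma dot_delta (c : 'rV[R]_7) m : dot c (delta_mx 0 m) = c 0 m.
Proof.
rewrite /dot (bigD1 m) //= mxE !eqxx mulr1 big1 ?addr0 // => k /negPf km.
by rewrite mxE km andbF mulr0.
Qed.
Lemma dotC (u v : 'rV[R]_7) : dot u v = dot v u.
Proof. by apply: eq_bigr => i _; rewrite mulrC. Qed.
Lemma phi_lin3 (u v w : 'rV[R]_7) :
  phi u v w = \sum_(k < 7) coord7 w k.+1 * phi u v (delta_mx 0 (inord k)).
Proof.
rewrite !big_ord_recr !big_ord0 /= /phi !e3E /= !dcoord //=; ring.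
Qed.
Lemma dot_cross (u v w : 'rV[R]_7) : dot (cross u v) w = phi u v w.
Proof.
rewrite phi_lin3 dotE; apply: eq_bigr => k _; rewrite mulrC crossE //.
Qed.
Definition chi (x y z : 'rV[R]_7) := cross x (cross y z) + dot x y *: z - dot x z *: y.
Lemma coordD (u v : 'rV[R]_7) n : coord7 (u + v) n = coord7 u n + coord7 v n.
Proof. by rewrite /coord7 mxE. Qed.
Lemma coordN (u : 'rV[R]_7) n : coord7 (- u) n = - coord7 u n.
Proof. by rewrite /coord7 mxE. Qed.
Lemma coordZ c (u : 'rV[R]_7) n : coord7 (c *: u) n = c * coord7 u n.
Proof. by rewrite /coord7 mxE. Qed.
Lemma psi_dot (x y z a : 'rV[R]_7) : psi x y z a = dot (chi x y z) a.
Proof.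
rewrite ident -dot_cross /chi.
set A := cross x _; set c := dot x y; set d := dot x z.
rewrite !dotE !big_ord_recr !big_ord0 /= !coordD !coordN !coordZ; ring.
Qed.
Lemma psi_swap (x y a b : 'rV[R]_7) : psi x y a b = - psi x y b a.
Proof. rewrite /psi !e4E /=; ring. Qed.

Lemma e4_P0 (P : 'M[R]_7) i j k l (x y z w : 'rV[R]_7) : \rank P = 3%N ->
  (x <= P)%MS -> (y <= P)%MS -> (z <= P)%MS -> (w <= P)%MS -> e4 i j k l x y z w = 0.
Proof.
move=> HP hx hy hz hw.
pose M : 'M[R]_(4,7) := \matrix_(r < 4, a < 7) (tnth [tuple x; y; z; w] r) 0 a.
pose S : 'M[R]_(7,4) := \matrix_(a < 7, c < 4) ((a == inord (tnth [tuple i; j; k; l] c).-1)%:R).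
have E : e4 i j k l x y z w = \det (M *m S).
  rewrite /e4; congr (\det _); apply/matrixP => r c; rewrite !mxE /coord7.
  rewrite (bigD1 (inord (tnth [tuple i; j; k; l] c).-1)) //= !mxE (eqxx (inord _ : 'I_7)) mulr1.
  rewrite big1 ?addr0 // => a /negPf ha; rewrite !mxE ha mulr0 //.
have rM : (\rank M <= \rank P)%N.
  apply: mxrankS; apply/row_subP => r.
  have -> : row r M = tnth [tuple x; y; z; w] r by apply/rowP => a; rewrite !mxE.
  by case: r => [[|[|[|[|n]]]] hr] //=.
rewrite HP in rM.
rewrite E; apply/eqP; apply: contraT => hdet.
have : M *m S \in unitmx by rewrite unitmxE unitfE.
rewrite -row_free_unit /row_free => /eqP h4.
have := mxrankM_maxl M S; rewrite h4 => /leq_trans /(_ rM) //.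
Qed.

Lemma psi_P0 (P : 'M[R]_7) (x y z w : 'rV[R]_7) : \rank P = 3%N ->
  (x <= P)%MS -> (y <= P)%MS -> (z <= P)%MS -> (w <= P)%MS -> psi x y z w = 0.
Proof.
move=> HP hx hy hz hw; rewrite /psi !(e4_P0 _ _ _ _ HP hx hy hz hw); rewrite !subr0 //.
Qed.

Lemma dot_self0 (u : 'rV[R]_7) : dot u u = 0 -> u = 0.
Proof.
move=> h; apply/rowP => m; rewrite mxE.
have /psumr_eq0P H : \sum_(i < 7) u 0 i * u 0 i = 0 by [].
have H' : forall i : 'I_7, true -> 0 <= u 0 i * u 0 i by move=> i _; rewrite -expr2 sqr_ge0.
by apply/eqP; rewrite -sqrf_eq0 expr2; apply/eqP; apply: (H H').
Qed.

Lemma psi_zero (P : 'M[R]_7) (x y z a : 'rV[R]_7) : associative_plane P ->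
  (x <= P)%MS -> (y <= P)%MS -> (z <= P)%MS -> psi x y z a = 0.
Proof.
move=> AP hx hy hz; case: AP => HP HC.
have hc : (chi x y z <= P)%MS.
  rewrite /chi -scaleNr; apply: addmx_sub; first apply: addmx_sub.
  - by apply: (HC) => //; apply: (HC).
  - exact: scalemx_sub.
  - exact: scalemx_sub.
have : dot (chi x y z) (chi x y z) = 0 by rewrite -psi_dot (psi_P0 HP).
by move/dot_self0; rewrite psi_dot => ->; rewrite /dot big1 // => m _; rewrite mxE mul0r.
Qed.

Lemma uQ0 (P : 'M[R]_7) (u w z : 'rV[R]_7) : associative_plane P ->
  (u <= P)%MS -> (w <= P)%MS -> (z <= P)%MS -> u *m form_mx (Psi2 w z) = 0.
Proof.
move=> AP hu hw hz; apply/rowP => j; rewrite !mxE.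
transitivity (- dot u (chi w z (delta_mx 0 j))).
  rewrite /dot -sumrN; apply: eq_bigr => m _.
  by rewrite mxE /Psi2 psi_swap psi_dot dot_delta mulrN.
rewrite dotC -psi_dot psi_swap opprK.
exact: (psi_zero _ AP hw hz hu).
Qed.
Lemma Qskew (w z : 'rV[R]_7) : (form_mx (Psi2 w z))^T = - form_mx (Psi2 w z).
Proof. by apply/matrixP => i j; rewrite !mxE /Psi2 psi_swap. Qed.
Lemma Wform (u v : 'rV[R]_7) : form_mx (wedge2 u v) = u^T *m v - v^T *m u.
Proof.
apply/matrixP => i j; rewrite !mxE /wedge2 !big_ord1 !mxE !dot_delta.
have -> : (0 : 'I_1) = ord0 by apply/val_inj.
by rewrite (mulrC (u _ j)).
Qed.
Lemma WQ0 (P : 'M[R]_7) (u v w z : 'rV[R]_7) : associative_plane P ->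
  (u <= P)%MS -> (v <= P)%MS -> (w <= P)%MS -> (z <= P)%MS ->
  form_mx (wedge2 u v) *m form_mx (Psi2 w z) = 0 /\
  form_mx (Psi2 w z) *m form_mx (wedge2 u v) = 0.
Proof.
move=> AP hu hv hw hz; rewrite Wform; split.
  by rewrite mulmxBl -!mulmxA (uQ0 AP hv hw hz) (uQ0 AP hu hw hz) !mulmx0 subrr.
have H (t : 'rV[R]_7) : (t <= P)%MS -> form_mx (Psi2 w z) *m t^T = 0.
  move=> ht; rewrite -[form_mx _]trmxK -trmx_mul Qskew mulmxN (uQ0 AP ht hw hz).
  by rewrite oppr0 trmx0.
by rewrite mulmxBr !mulmxA !H // !mul0mx subrr.
Qed.
End S.

From Stdlib Require Import FunctionalExtensionality.

Theorem proposition4p7 (R : realType) (P X Y : 'M[R]_7) :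
  associative_plane P -> in_Lambda2 P X -> in_PsiP P Y ->
  bracket X Y = (fun _ => 0).
Proof.
move=> AP [n [c [u [v [huv ->]]]]] [n' [c' [u' [v' [huv' ->]]]]].
have XY : (\sum_(k < n) c k *: form_mx (wedge2 (u k) (v k))) *m
          (\sum_(k < n') c' k *: form_mx (Psi2 (u' k) (v' k))) = 0.
  rewrite mulmx_suml big1 // => k _; rewrite mulmx_sumr big1 // => l _.
  case: (huv k) => h1 h2; case: (huv' l) => h3 h4.
  by rewrite -scalemxAl -scalemxAr (WQ0 AP h1 h2 h3 h4).1 !scaler0.
have YX : (\sum_(k < n') c' k *: form_mx (Psi2 (u' k) (v' k))) *m
          (\sum_(k < n) c k *: form_mx (wedge2 (u k) (v k))) = 0.
  rewrite mulmx_suml big1 // => l _; rewrite mulmx_sumr big1 // => k _.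
  case: (huv k) => h1 h2; case: (huv' l) => h3 h4.
  by rewrite -scalemxAl -scalemxAr (WQ0 AP h1 h2 h3 h4).2 !scaler0.
apply: functional_extensionality => a.
by rewrite /bracket /skew_op -!mulmxA XY YX !mulmx0 subrr.
Qed.
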